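(* Let $K$ be a totally real number field of degree $n$ and let $A\subseteq\mathbb{R}^n$ be an integer plane with integer distance $\mathrm{ID}(A)=k>0$. Then there exists $\delta\in\mathcal{O}_K^\vee$ such that $A$ is contained in the hyperplane $\{x\in\mathbb{R}^n:\sum_{i=1}^n\tau_i(\delta)x_i=k\}$.
   Context: $\tau_1,\dots,\tau_n$ are the real embeddings of $K$; the Minkowski embedding is $\iota_M:K\to\mathbb{R}^n$, $\alpha\mapsto(\tau_1(\alpha),\dots,\tau_n(\alpha))$, and $\Lambda=\iota_M(\mathcal{O}_K)$ is a lattice of rank $n$. The codifferent is $\mathcal{O}_K^\vee=\{\delta\in K:\operatorname{Tr}_{K/\mathbb{Q}}(\delta\alpha)\in\mathbb{Z}\ \forall\alpha\in\mathcal{O}_K\}$. An integer plane is an affine subspace $A\subseteq\mathbb{R}^n$ such that the set $A\cap\Lambda$ spans (affinely) a lattice of rank equal to $\dim A$. For an integer plane $A$ not containing the origin, its integer distance $\mathrm{ID}(A)$ is the index of the subgroup generated by $A\cap\Lambda$ in the lattice $\Lambda\cap\operatorname{Span}_{\mathbb{R}}(A)$ (and $\mathrm{ID}(A)=0$ if $A$ contains the origin). *)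

(* Defs.v *)
From HB Require Import structures.
From mathcomp Require Import all_boot all_order all_algebra all_field.
From mathcomp Require Import reals.
Set Implicit Arguments. Unset Strict Implicit. Unset Printing Implicit Defensive.
Import Order.TTheory GRing.Theory Num.Theory.
Local Open Scope ring_scope.

Section NumberFieldDefs.
Variables (R : realType) (K : fieldExtType rat).

Definition ring_of_integers (a : K) : Prop :=
  exists p : {poly int}, p \is monic /\ root (map_poly (fun z : int => z%:~R : K) p) a.

Variable n : nat.
Variable tau : 'I_n -> {rmorphism K -> R}.

Definition trK (a : K) : R := \sum_(i < n) tau i a.

Definition codifferent (d : K) : Prop :=
  forall a : K, ring_of_integers a -> exists z : int, trK (d * a) = z%:~R.

Definition minkowski (a : K) : 'rV[R]_n := \row_(i < n) tau i a.

Definition Lambda (x : 'rV[R]_n) : Prop :=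
  exists a : K, ring_of_integers a /\ x = minkowski a.
End NumberFieldDefs.

Section AffineDefs.
Variables (R : realType) (n : nat).
Notation pt := 'rV[R]_n.

Definition affine_subspace (A : pt -> Prop) : Prop :=
  exists (p : pt) (V : 'M[R]_n), forall x, A x <-> (x - p <= V)%MS.

Definition lin_span (S : pt -> Prop) (x : pt) : Prop :=
  exists m (c : 'I_m -> R) (s : 'I_m -> pt),
    (forall j, S (s j)) /\ x = \sum_(j < m) c j *: s j.

Definition aff_span (S : pt -> Prop) (x : pt) : Prop :=
  exists m (c : 'I_m -> R) (s : 'I_m -> pt),
    (forall j, S (s j)) /\ \sum_(j < m) c j = 1 /\ x = \sum_(j < m) c j *: s j.

Definition gen_group (S : pt -> Prop) (x : pt) : Prop :=
  exists m (c : 'I_m -> int) (s : 'I_m -> pt),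
    (forall j, S (s j)) /\ x = \sum_(j < m) s j *~ c j.

Definition has_index (H G : pt -> Prop) (k : nat) : Prop :=
  exists r : 'I_k -> pt, (forall j, H (r j)) /\
    forall h, H h -> exists! j, G (h - r j).

Variable L : pt -> Prop.

Definition meetL (A : pt -> Prop) (x : pt) : Prop := A x /\ L x.

Definition integer_plane (A : pt -> Prop) : Prop :=
  affine_subspace A /\ forall x, aff_span (meetL A) x <-> A x.

Definition integer_distance (A : pt -> Prop) (k : nat) : Prop :=
  (A 0 /\ k = 0%N) \/
  (~ A 0 /\ has_index (fun x => L x /\ lin_span A x) (gen_group (meetL A)) k).
End AffineDefs.

(* Main.v *)
Require Import Defs.
From HB Require Import structures.
From mathcomp Require Import all_boot all_order all_algebra all_field.
From mathcomp Require Import reals.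
From mathcomp Require Import ring lra zify.
From Stdlib Require Import Classical.
Import Order.TTheory GRing.Theory Num.Theory.
Set Implicit Arguments. Unset Strict Implicit. Unset Printing Implicit Defensive.
Local Open Scope ring_scope.

Section Ded.
Variables (R : realType) (K : fieldExtType rat) (m : nat).
Variable tau : 'I_m -> {rmorphism K -> R}.
Hypothesis tau_inj : forall i j : 'I_m, (forall a : K, tau i a = tau j a) -> i = j.

Lemma dedekind_set (S : {set 'I_m}) (v : 'I_m -> R) :
  (forall a, \sum_(i in S) v i * tau i a = 0) -> forall i, i \in S -> v i = 0.
Proof.
have [N leN] := ubnP #|S|; elim: N S v leN => // N IH S v leN Hs i iS.
case: (pickP [pred j | (j \in S) && (j != i)]) => [j /andP [jS ji] | none].
  have [b Hb] : exists b, tau i b <> tau j b.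
    apply: not_all_ex_not => H; by move: ji; rewrite (tau_inj H) eqxx.
  pose S' := S :\ j.
  have HS' : (#|S'| < N)%N.
    by rewrite -ltnS (leq_trans _ leN) // [#|S|](cardsD1 j) jS.
  have Hz : v i * (tau i b - tau j b) = 0.
    apply: (IH S' (fun x => v x * (tau x b - tau j b)) HS'); last first.
      by rewrite in_setD1 eq_sym ji.
    move=> a.
    have -> : \sum_(x in S') v x * (tau x b - tau j b) * tau x a
       = \sum_(x in S) v x * (tau x b - tau j b) * tau x a.
      by rewrite [in RHS](big_setD1 j) //= subrr mulr0 mul0r add0r.
    rewrite (eq_bigr (fun x => v x * tau x (b * a) - tau j b * (v x * tau x a))); last first.
      by move=> x _; rewrite rmorphM /=; ring.
    by rewrite sumrB -mulr_sumr !Hs mulr0 subrr.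
  move/eqP: Hz; rewrite mulf_eq0 subr_eq0 => /orP [/eqP // | /eqP Hij]; by case: Hb.
have := Hs 1; rewrite (big_pred1 i) ?rmorph1 ?mulr1 //.
move=> x /=; apply/idP/eqP => [xS | ->//].
have := none x; rewrite /= xS /=; by move/negbFE/eqP.
Qed.

Lemma dedekind (v : 'I_m -> R) :
  (forall a, \sum_i v i * tau i a = 0) -> forall i, v i = 0.
Proof.
move=> H i; apply: (@dedekind_set setT) => // a.
by rewrite (eq_bigl (fun _ => true)) // => x; rewrite in_setT.
Qed.
End Ded.

Section Trace.
Variables (R : realType) (K : fieldExtType rat).
Local Notation n := (\dim {:K}).
Variable tau : 'I_n -> {rmorphism K -> R}.
Hypothesis tau_inj : forall i j : 'I_n, (forall a : K, tau i a = tau j a) -> i = j.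

Local Notation e := (vbasis {:K}).

Lemma expandK (a : K) : a = \sum_(j < n) coord e j a *: e`_j.
Proof. exact: coord_vbasis (memvf a). Qed.

Lemma tau_expand i (a : K) : tau i a = \sum_(j < n) ratr (coord e j a) * tau i e`_j.
Proof.
by rewrite {1}(expandK a) rmorph_sum; apply: eq_bigr => j _; rewrite rmorphZ_num.
Qed.

Definition Nm : 'M[R]_n := \matrix_(i, j) tau i e`_j.

Lemma Nm_unit : Nm \in unitmx.
Proof.
rewrite -row_free_unit -kermx_eq0; apply/eqP/row_matrixP => r; rewrite row0.
set u := row r (kermx Nm).
have Hu : u *m Nm = 0 by apply/sub_kermxP; exact: row_sub.
apply/rowP => i; rewrite [RHS]mxE; apply: (@dedekind _ _ _ tau tau_inj (fun x => u 0 x)) => a.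
rewrite (eq_bigr (fun x => \sum_(j < n) ratr (coord e j a) * (u 0 x * tau x e`_j))); last first.
  by move=> x _; rewrite tau_expand mulr_sumr; apply: eq_bigr => j _; ring.
rewrite exchange_big /=; apply: big1 => j _; rewrite -mulr_sumr.
move/matrixP: Hu => /(_ 0 j); rewrite !mxE => Hu.
rewrite -[RHS](mulr0 (ratr (coord e j a))); congr (_ * _).
rewrite -{}[RHS]Hu; apply: eq_bigr => x _; by rewrite /Nm !mxE.
Qed.

Definition Bm (a : K) : 'M[rat]_n := \matrix_(j, l) coord e l (e`_j * a).
Definition trQ (a : K) : rat := \tr (Bm a).

Lemma Bm_eq a : map_mx ratr (Bm a) *m Nm^T = Nm^T *m diag_mx (\row_i tau i a).
Proof.
apply/matrixP => j i; rewrite mul_mx_diag !mxE -rmorphM (tau_expand i).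
by apply: eq_bigr => l _; rewrite !mxE.
Qed.

Lemma trK_trQ a : \sum_i tau i a = ratr (trQ a).
Proof.
have U : Nm^T \in unitmx by rewrite unitmx_tr Nm_unit.
have -> : \sum_i tau i a = \tr (diag_mx (\row_i tau i a)).
  by rewrite mxtrace_diag; apply: eq_bigr => i _; rewrite mxE.
rewrite -[diag_mx _](mulKmx U) -Bm_eq mxtrace_mulC mulmxK //.
by rewrite /trQ trace_map_mx.
Qed.
End Trace.

Section OKdef.
Variable (K : fieldExtType rat).
Definition OK (a : K) := integralOver (intr : int -> K) a.
Lemma OK_add a b : OK a -> OK b -> OK (a + b). Proof. exact: integral_add. Qed.
Lemma OK_sub a b : OK a -> OK b -> OK (a - b). Proof. exact: integral_sub. Qed.
Lemma OK_mul a b : OK a -> OK b -> OK (a * b). Proof. exact: integral_mul. Qed.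
Lemma OK_int (z : int) : OK z%:~R. Proof. exact: (integral_id (intr : int -> K)). Qed.
Lemma OK_sum (I : finType) (P : pred I) (F : I -> K) :
  (forall i, P i -> OK (F i)) -> OK (\sum_(i | P i) F i).
Proof. move=> H; apply: big_ind => //; [exact: (OK_int 0)| exact: OK_add]. Qed.
End OKdef.

Lemma integral_int_rat (q : rat) (R : realType) :
  integralOver (intr : int -> R) (ratr q) -> q \is a Num.int.
Proof.
case=> p mp rp.
have Hq : root (map_poly (intr : int -> rat) p) q.
  move: rp; rewrite /root.
  have -> : map_poly (intr : int -> R) p = map_poly ratr (map_poly (intr : int -> rat) p).
    by rewrite -map_poly_comp; apply: eq_map_poly => z /=; rewrite rmorph_int.
  by rewrite horner_map fmorph_eq0.
have HC : root (map_poly (intr : int -> algC) p) (ratr q).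
  have -> : map_poly (intr : int -> algC) p = map_poly ratr (map_poly (intr : int -> rat) p).
    by rewrite -map_poly_comp; apply: eq_map_poly => z /=; rewrite rmorph_int.
  by rewrite /root horner_map (eqP Hq) rmorph0.
rewrite -Cint_rat; apply: Cint_rat_Aint; first exact: Crat_rat.
apply: root_monic_Aint HC _ _; first exact: monic_map.
by apply/polyOverP => i; rewrite coef_map /= rpred_int.
Qed.

Section TraceProps.
Variables (R : realType) (K : fieldExtType rat).
Local Notation n := (\dim {:K}).
Variable tau : 'I_n -> {rmorphism K -> R}.
Hypothesis tau_inj : forall i j : 'I_n, (forall a : K, tau i a = tau j a) -> i = j.
Local Notation trQ := (@trQ K).
Local Notation tr := (trK_trQ tau_inj).

Lemma trQD a b : trQ (a + b) = trQ a + trQ b.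
Proof.
apply: (fmorph_inj (ratr : {rmorphism rat -> R})).
by rewrite rmorphD /= -!tr -big_split /=; apply: eq_bigr => i _; rewrite rmorphD.
Qed.

Lemma trQZ (c : rat) a : trQ (c *: a) = c * trQ a.
Proof.
apply: (fmorph_inj (ratr : {rmorphism rat -> R})).
by rewrite rmorphM /= -!tr mulr_sumr; apply: eq_bigr => i _; rewrite rmorphZ_num.
Qed.

Lemma trQ0 : trQ 0 = 0.
Proof. by have := trQD 0 0; rewrite addr0 => /eqP; rewrite -subr_eq subrr eq_sym => /eqP. Qed.

Lemma trQ_sum (I : finType) (P : pred I) (F : I -> K) :
  trQ (\sum_(i | P i) F i) = \sum_(i | P i) trQ (F i).
Proof. by apply: big_morph; [exact: trQD | exact: trQ0]. Qed.

Lemma trQ1 : trQ 1 = n%:R.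
Proof.
apply: (fmorph_inj (ratr : {rmorphism rat -> R})).
rewrite /= -tr rmorph_nat (eq_bigr (fun _ => 1)) ?sumr_const ?card_ord // => i _.
exact: rmorph1.
Qed.

Lemma OK_trQ a : OK a -> trQ a \is a Num.int.
Proof.
move=> Ha; apply: (@integral_int_rat _ R); rewrite -tr.
apply: big_ind => //; first exact: (integral0 (intr : int -> R)).
  by move=> x y; apply: integral_add.
move=> i _; case: (integral_rmorph (tau i) Ha) => p mp rp; exists p => //.
by move: rp; congr root; apply: eq_map_poly => z /=; rewrite rmorph_int.
Qed.
End TraceProps.

Lemma scale_OK (K : fieldExtType rat) (x : K) : exists m : int, m != 0 /\ OK (m%:~R * x).
Proof.
have [q Dq] := polyOver1P (minPolyOver 1%VS x).
have mq : q \is monic by rewrite -(map_monic (in_alg K)) -Dq monic_minPoly.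
have rq : root (map_poly (in_alg K) q) x by rewrite -Dq root_minPoly.
set s := size q.
have s_gt0 : (0 < s)%N by rewrite size_poly_gt0 monic_neq0.
have lq : q`_s.-1 = 1 by rewrite -lead_coefE; apply/eqP; rewrite -monicE.
pose d : int := \prod_(i < s) denq q`_i.
have d0 : d != 0 by apply/prodf_neq0 => i _; exact: denq_neq0.
pose c i : rat := q`_i * d%:~R ^+ (s.-1 - i).
have cint : forall i, (i < s)%N -> c i \is a Num.int.
  move=> i lis; rewrite /c; case: (ltnP i s.-1) => his.
  - have -> : (s.-1 - i)%N = (s.-1 - i.+1).+1 by lia.
    rewrite exprS mulrA; apply: rpredM; last by apply: rpredX; exact: intr_int.
    rewrite /d (bigD1 (Ordinal lis)) //= rmorphM mulrA -numqE.
    by apply: rpredM; exact: intr_int.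
  - have -> : i = s.-1 by lia.
    by rewrite lq subnn expr0 mulr1.
pose p : {poly int} := \poly_(i < s) Num.floor (c i).
exists d; split => //.
exists p.
  rewrite monicE lead_coefE size_poly_eq; last first.
    by rewrite /c lq subnn expr0 mulr1 floor1.
  by rewrite coef_poly prednK // leqnn /c lq subnn expr0 mulr1 floor1.
rewrite /root (@horner_coef_wide _ s); last first.
  by rewrite map_polyE (leq_trans (size_Poly _)) // size_map; exact: size_poly.
have Ec : forall i : 'I_s, (map_poly (intr : int -> K) p)`_i = in_alg K (c i).
  move=> i; rewrite coef_map coef_poly ltn_ord /= -[in RHS](floorK (cint i (ltn_ord i))).
  by rewrite scaler_int.
rewrite (eq_bigr (fun i : 'I_s => (d%:~R : K) ^+ s.-1 * (in_alg K q`_i * x ^+ i))); last first.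
  move=> i _; rewrite Ec /c rmorphM rmorphXn /= scaler_int exprMn.
  have -> : (d%:~R : K) ^+ s.-1 = d%:~R ^+ (s.-1 - i) * d%:~R ^+ i.
    by rewrite -exprD subnK // -ltnS prednK.
  ring.
rewrite -mulr_sumr.
move: rq; rewrite /root horner_coef size_map_poly => /eqP rq.
rewrite (eq_bigr (fun i : 'I_s => (map_poly (in_alg K) q)`_i * x ^+ i)) ?rq ?mulr0 //.
by move=> i _; rewrite coef_map.
Qed.

Section IB.
Variables (R : realType) (K : fieldExtType rat).
Local Notation n := (\dim {:K}).
Variable tau : 'I_n -> {rmorphism K -> R}.
Hypothesis tau_inj : forall i j : 'I_n, (forall a : K, tau i a = tau j a) -> i = j.
Local Notation e := (vbasis {:K}).
Local Notation trQ := (@trQ K).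

Lemma e_free : free e. Proof. exact: basis_free (vbasisP _). Qed.

Lemma coord_comb (v : 'I_n -> rat) l : coord e l (\sum_j v j *: e`_j) = v l.
Proof. exact: coord_sum_free e_free. Qed.

Definition omega (P : 'M[rat]_n) j : K := \sum_l P j l *: e`_l.
Definition G0 : 'M[rat]_n := \matrix_(l, m) trQ (e`_l * e`_m).
Definition Gram (P : 'M[rat]_n) : 'M[rat]_n := \matrix_(i, j) trQ (omega P i * omega P j).

Lemma Gram_mul P : Gram P = P *m G0 *m P^T.
Proof.
apply/matrixP => i j; rewrite !mxE /omega mulr_suml (trQ_sum tau_inj).
under [RHS]eq_bigr do rewrite !mxE mulr_suml.
rewrite [RHS]exchange_big /=.
apply: eq_bigr => l _; rewrite mulr_sumr (trQ_sum tau_inj).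
apply: eq_bigr => m _; rewrite !mxE -scalerAl -scalerAr !(trQZ tau_inj); ring.
Qed.

Lemma trQ_nondeg (d : K) : (forall x, trQ (d * x) = 0) -> d = 0.
Proof.
move=> H; apply/eqP/negPn/negP => d0.
have := H d^-1; rewrite mulfV // (trQ1 tau_inj) => /eqP.
by rewrite pnatr_eq0 dimv_eq0 => /eqP H0; have := memvf (1 : K); rewrite H0 memv0 oner_eq0.
Qed.

Lemma G0_unit : G0 \in unitmx.
Proof.
rewrite -row_free_unit -kermx_eq0; apply/eqP/row_matrixP => r; rewrite row0.
set u := row r (kermx G0).
have Hu : u *m G0 = 0 by apply/sub_kermxP; exact: row_sub.
pose d := \sum_l u 0 l *: e`_l.
have Hd : d = 0.
  apply: trQ_nondeg => x.
  rewrite (expandK x) mulr_sumr (trQ_sum tau_inj) big1 // => m _.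
  rewrite -scalerAr (trQZ tau_inj) mulr_suml (trQ_sum tau_inj).
  move/matrixP: Hu => /(_ 0 m); rewrite !mxE => Hu.
  rewrite [X in _ * X](_ : _ = \sum_j u 0 j * G0 j m); first by rewrite Hu mulr0.
  by apply: eq_bigr => l _; rewrite -scalerAl (trQZ tau_inj) /G0 !mxE.
apply/rowP => l; rewrite [RHS]mxE -(coord_comb (fun l => u 0 l) l) -/d Hd.
by rewrite linear0.
Qed.

Definition Good P := P \in unitmx /\ forall j, OK (omega P j).
Definition crow P (a : K) : 'rV[rat]_n := (\row_l coord e l a) *m invmx P.

Lemma omega_mul T P i : omega (T *m P) i = \sum_m T i m *: omega P m.
Proof.
rewrite /omega; under [RHS]eq_bigr do rewrite scaler_sumr.
rewrite [RHS]exchange_big /=; apply: eq_bigr => l _.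
by rewrite mxE scaler_suml; apply: eq_bigr => m _; rewrite scalerA.
Qed.

Lemma crowE P a : P \in unitmx -> a = \sum_j crow P a 0 j *: omega P j.
Proof.
move=> U; rewrite {1}(expandK a) /omega.
under [RHS]eq_bigr do rewrite scaler_sumr.
rewrite [RHS]exchange_big /=; apply: eq_bigr => l _.
under [RHS]eq_bigr do rewrite scalerA.
rewrite -scaler_suml; congr (_ *: _).
have : (crow P a *m P) 0 l = coord e l a by rewrite /crow mulmxKV // mxE.
by rewrite mxE => <-; apply: eq_bigr => j _; rewrite mulrC.
Qed.

Lemma int_det (M : 'M[rat]_n) : (forall i j, M i j \is a Num.int) -> \det M \is a Num.int.
Proof.
move=> H.
have -> : M = map_mx (intr : int -> rat) (\matrix_(i, j) Num.floor (M i j)).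
  by apply/matrixP => i j; rewrite !mxE floorK.
by rewrite det_map_mx intr_int.
Qed.

Lemma disc_eq P : \det (Gram P) = \det P ^+ 2 * \det G0.
Proof. by rewrite Gram_mul !det_mulmx det_tr; ring. Qed.

Lemma disc_neq0 P : P \in unitmx -> \det (Gram P) != 0.
Proof.
move=> U; rewrite disc_eq mulf_neq0 // ?expf_neq0 //.
by rewrite -unitfE -unitmxE G0_unit.
Qed.

Lemma Good_disc_int P : Good P -> \det (Gram P) \is a Num.int.
Proof.
case=> _ H; apply: int_det => i j; rewrite mxE.
by apply: (OK_trQ tau_inj); apply: OK_mul.
Qed.

Definition mu P : nat := `|Num.floor (\det (Gram P))|%N.

Lemma OK_zscale (z : int) (x : K) : OK x -> OK ((z%:~R : rat) *: x).
Proof. by move=> Hx; rewrite scaler_int -mulrzl; apply: OK_mul => //; exact: OK_int. Qed.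


Lemma step P a j1 : Good P -> OK a -> ~~ (crow P a 0 j1 \is a Num.int) ->
  exists P', Good P' /\ (mu P' < mu P)%N.
Proof.
move=> [UP OP] Oa nj1; set c := crow P a.
pose Pr := fun j : 'I_n => ~~ (c 0 j \is a Num.int).
case: (@arg_maxnP _ j1 Pr (fun j => nat_of_ord j) nj1) => j0 Pj0 Hmax.
pose fr j := c 0 j - (Num.floor (c 0 j))%:~R.
have fr_int j : c 0 j \is a Num.int -> fr j = 0 by move=> H; rewrite /fr floorK // subrr.
have fr_ge0 j : 0 <= fr j by have := floor_le (c 0 j); rewrite /fr; lra.
have fr_lt1 j : fr j < 1.
  by have := floorD1_gt (c 0 j); rewrite /fr intrD; lra.
have fr0 : fr j0 != 0.
  by apply: contra Pj0; rewrite /fr subr_eq0 intrEfloor eq_sym.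
pose T : 'M[rat]_n := \matrix_(i, j) if i == j0 then fr j else (i == j)%:R.
have detT : \det T = fr j0.
  rewrite det_trig; last first.
    apply/is_trig_mxP => i j lij; rewrite mxE; case: eqP => [Hi | _].
      apply: fr_int; apply: contraT => Hj; have := Hmax j Hj.
      by rewrite -Hi /= => H; lia.
    by case: (i =P j) lij => // ->; rewrite ltnn.
  rewrite (bigD1 j0) //= mxE eqxx big1 ?mulr1 // => i /negbTE ij.
  by rewrite mxE ij eqxx.
have UT : T \in unitmx by rewrite unitmxE detT unitfE.
have GP' : Good (T *m P).
  split; first by rewrite unitmx_mul UT UP.
  move=> i; rewrite omega_mul; case: (eqVneq i j0) => [-> | ij0].
  + have -> : \sum_m T j0 m *: omega P m
        = a - \sum_m (Num.floor (c 0 m))%:~R *: omega P m.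
      rewrite {1}(crowE a UP) -sumrB; apply: eq_bigr => m _.
      by rewrite mxE eqxx -scalerBl.
    apply: OK_sub => //; apply: OK_sum => m _; exact: OK_zscale.
  + rewrite (bigD1 i) //= big1 ?addr0.
      by rewrite mxE (negbTE ij0) eqxx scale1r.
    by move=> m /negbTE mi; rewrite mxE (negbTE ij0) eq_sym mi scale0r.
exists (T *m P); split => //.
rewrite /mu.
have HD := Good_disc_int (conj UP OP).
have D0 := disc_neq0 UP.
have HD' : \det (Gram (T *m P)) = fr j0 ^+ 2 * \det (Gram P).
  by rewrite !disc_eq det_mulmx detT; ring.
have HD'i := Good_disc_int GP'.
set D := \det (Gram P) in HD D0 HD' *.
set D' := \det (Gram (T *m P)) in HD' HD'i *.
have Hlt : `|D'| < `|D|.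
  rewrite HD' normrM normrX ger0_norm ?fr_ge0 //.
  have := fr_ge0 j0; have := fr_lt1 j0; have : 0 < `|D| by rewrite normr_gt0.
  move: (fr j0) (`|D|) => f x Hx Hf1 Hf0.
  have h1 : 0 < 1 - f ^+ 2 by nra.
  have := mulr_gt0 h1 Hx; nra.
rewrite -(floorK HD) -(floorK HD'i) -!intr_norm ltr_int in Hlt.
lia.
Qed.

Lemma Good_exists : exists P, Good P.
Proof.
have H : forall j : 'I_n, exists m : int, m != 0 /\ OK (m%:~R * e`_j) := fun j => scale_OK e`_j.
have [f Hf] := fin_all_exists H.
exists (diag_mx (\row_j ((f j)%:~R : rat))); split.
  rewrite unitmxE det_diag unitfE; apply/prodf_neq0 => j _.
  by rewrite mxE intr_eq0; case: (Hf j).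
move=> j; rewrite /omega (bigD1 j) //= big1 ?addr0.
  by rewrite !mxE eqxx mulr1n scaler_int -mulrzl; case: (Hf j).
by move=> l /negbTE lj; rewrite !mxE eq_sym lj mulr0n scale0r.
Qed.

Lemma ib_exists : exists P, Good P /\ forall a, OK a -> forall j, crow P a 0 j \is a Num.int.
Proof.
have [P0 G0] := Good_exists.
suff H : forall m P, Good P -> mu P = m ->
    exists P', Good P' /\ forall a, OK a -> forall j, crow P' a 0 j \is a Num.int.
  exact: (H _ P0 G0 erefl).
elim/ltn_ind => m IH P GP Hm.
case: (classic (forall a, OK a -> forall j, crow P a 0 j \is a Num.int)) => H.
  by exists P.
have [a Ha] := not_all_ex_not _ _ H.
have [Oa Hj] := imply_to_and _ _ Ha.
have [j Hj'] := not_all_ex_not _ _ Hj.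
have [P' [GP' lt]] := step GP Oa (introN idP Hj').
by apply: (IH (mu P')) GP' erefl; rewrite -Hm.
Qed.
End IB.

Lemma smith_ext (F : fieldType) m n (M : 'M[int]_(m, n)) (w : 'cV[F]_n) :
  (forall (z : 'rV[int]_n) (N : int) (y : 'rV[int]_m), N != 0 -> N *: z = y *m M ->
      exists t : int, (map_mx intr z *m w) 0 0 = t%:~R) ->
  exists u : 'cV[int]_n, map_mx intr M *m map_mx intr u = map_mx intr M *m w.
Proof.
move=> H.
have [L UL [Rm UR [d _ DM]]] := int_Smith_normal_form M.
set D := \matrix_(i, j) _ in DM.
pose cond (k : 'I_n) := (k < m)%N && (d`_k != 0).
have Ht : forall k : 'I_n, exists t : int,
    cond k -> (map_mx intr (row k Rm) *m w) 0 0 = t%:~R.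
  move=> k; case Ck: (cond k); last by exists 0.
  case/andP: Ck => km dk.
  pose k' := Ordinal km.
  have Heq : d`_k *: row k Rm = row k' (invmx L) *m M.
    rewrite DM -row_mul !mulmxA mulVmx // mul1mx row_mul.
    apply/rowP => j; rewrite !mxE (bigD1 k) //= big1 ?addr0.
      by rewrite !mxE eqxx mulr1n.
    move=> l lk; rewrite !mxE /=.
    have -> : (k == l :> nat) = false by apply/negbTE; rewrite eq_sym.
    by rewrite mulr0n mul0r.
  have [t Ht] := H _ _ _ dk Heq.
  by exists t.
have [t Hts] := fin_all_exists Ht.
pose v : 'cV[int]_n := \col_k (if cond k then t k else 0).
exists (invmx Rm *m v).
rewrite DM !map_mxM -!mulmxA; congr (_ *m _).
rewrite [X in _ *m X = _]mulmxA -map_mxM mulmxV // map_mx1 mul1mx.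
apply/colP => i; rewrite !mxE; apply: eq_bigr => k _; rewrite !mxE.
case: (eqVneq (i : nat) k) => [ik | ik]; last by rewrite mulr0n mul0r !mul0r.
rewrite mulr1n; case: (eqVneq d`_i 0) => [-> | di]; first by rewrite !mul0r.
have Ck : cond k by rewrite /cond -ik ltn_ord di.
rewrite Ck; congr (_ * _); symmetry; etransitivity; last exact: (Hts k Ck).
by rewrite !mxE; apply: eq_bigr => j _; rewrite !mxE.
Qed.

Section Geo.
Variables (R : realType) (n : nat).
Local Notation pt := 'rV[R]_n.

Definition ordU m1 m2 (A : Type) (f : 'I_m1 -> A) (g : 'I_m2 -> A) (i : 'I_(m1 + m2)) : A :=
  match split i with inl a => f a | inr b => g b end.

Lemma sum_ordU (V : zmodType) m1 m2 (f : 'I_m1 -> V) (g : 'I_m2 -> V) :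
  \sum_(i < m1 + m2) ordU f g i = \sum_i f i + \sum_i g i.
Proof.
rewrite big_split_ord /=; congr (_ + _); apply: eq_bigr => i _.
  by rewrite /ordU (unsplitK (inl _ : 'I_m1 + 'I_m2)).
by rewrite /ordU (unsplitK (inr _ : 'I_m1 + 'I_m2)).
Qed.

Lemma gen_group0 (S : pt -> Prop) : gen_group S 0.
Proof.
exists 0%N, (fun _ => 0), (fun _ => 0); split => [[]|] //.
by rewrite big1 // => i _; rewrite mulr0z.
Qed.

Lemma gen_groupD (S : pt -> Prop) x y : gen_group S x -> gen_group S y -> gen_group S (x + y).
Proof.
move=> [m1 [c1 [s1 [H1 ->]]]] [m2 [c2 [s2 [H2 ->]]]].
exists (m1 + m2)%N, (ordU c1 c2), (ordU s1 s2); split.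
  by move=> i; rewrite /ordU; case: split.
rewrite -sum_ordU; apply: eq_bigr => i _; rewrite /ordU; by case: split.
Qed.

Lemma gen_groupN (S : pt -> Prop) x : gen_group S x -> gen_group S (- x).
Proof.
move=> [m [c [s [Hs ->]]]]; exists m, (fun i => - c i), s; split => //.
by rewrite -sumrN; apply: eq_bigr => i _; rewrite mulrNz.
Qed.

Lemma gen_group_sum (S : pt -> Prop) (I : finType) (F : I -> pt) :
  (forall i, gen_group S (F i)) -> gen_group S (\sum_i F i).
Proof.
move=> H; apply: (big_ind (gen_group S)) => //; [exact: gen_group0 | exact: gen_groupD].
Qed.

Lemma lin_spanD (S : pt -> Prop) x y : lin_span S x -> lin_span S y -> lin_span S (x + y).
Proof.
move=> [m1 [c1 [s1 [H1 ->]]]] [m2 [c2 [s2 [H2 ->]]]].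
exists (m1 + m2)%N, (ordU c1 c2), (ordU s1 s2); split.
  by move=> i; rewrite /ordU; case: split.
rewrite -sum_ordU; apply: eq_bigr => i _; rewrite /ordU; by case: split.
Qed.

Lemma index_mult (H G : pt -> Prop) k :
  has_index H G k ->
  (forall x y, H x -> H y -> H (x + y)) ->
  (forall x y, G x -> G y -> G (x + y)) ->
  (forall x, G x -> G (- x)) -> G 0 ->
  forall h, H h -> G (h *+ k).
Proof.
move=> [r [Hr Hu]] HD GD GN G0 h Hh.
have Ex : forall j : 'I_k, exists j' : 'I_k, G (h + r j - r j').
  by move=> j; have [j' [Hj' _]] := Hu _ (HD _ _ Hh (Hr j)); exists j'.
have [sg Hsg] := fin_all_exists Ex.
have sg_inj : injective sg.
  move=> j1 j2 E.
  have [j0 [_ U]] := Hu _ (Hr j1).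
  have e1 : j1 = j0 by apply/esym/U; rewrite subrr.
  have e2 : j2 = j0.
    apply/esym/U; have := GD _ _ (Hsg j1) (GN _ (Hsg j2)); rewrite E.
    by congr G; rewrite opprB addrA subrK opprD addrACA subrr add0r.
  by rewrite e1 e2.
have : G (\sum_j (h + r j - r (sg j))).
  by apply: (big_ind G) => // j _; exact: Hsg.
congr G; rewrite sumrB big_split /= sumr_const card_ord.
by rewrite -(@reindex_inj _ _ _ _ sg xpredT r sg_inj) /= addrK.
Qed.
End Geo.

Section MinkLemmas.
Variables (R : realType) (K : fieldExtType rat) (n : nat).
Variable tau : 'I_n -> {rmorphism K -> R}.
Lemma minD a b : minkowski tau (a + b) = minkowski tau a + minkowski tau b.
Proof. by apply/rowP => i; rewrite !mxE rmorphD. Qed.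
Lemma minZ c a : minkowski tau (c *: a) = ratr c *: minkowski tau a.
Proof. by apply/rowP => i; rewrite !mxE rmorphZ_num. Qed.
Lemma min0 : minkowski tau 0 = 0.
Proof. by apply/rowP => i; rewrite !mxE rmorph0. Qed.
Lemma min_sum (I : finType) (F : I -> K) :
  minkowski tau (\sum_i F i) = \sum_i minkowski tau (F i).
Proof. by apply: big_morph; [exact: minD | exact: min0]. Qed.
End MinkLemmas.

Lemma roiP (K : fieldExtType rat) (a : K) : ring_of_integers a <-> OK a.
Proof. by split; [case=> p [mp rp]; exists p | case=> p mp rp; exists p]. Qed.

Unset Implicit Arguments.
Theorem lemma2p1 (R : realType) (K : fieldExtType rat) (n : nat)
  (Hn : \dim {:K} = n)
  (tau : 'I_n -> {rmorphism K -> R})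
  (tau_inj : forall i j : 'I_n, (forall a : K, tau i a = tau j a) -> i = j)
  (tau_all : forall f : {rmorphism K -> R}, exists i : 'I_n, forall a : K, f a = tau i a)
  (A : 'rV[R]_n -> Prop) (k : nat)
  (HA : integer_plane (Lambda tau) A)
  (HID : integer_distance (Lambda tau) A k) (Hk : (0 < k)%N) :
  exists d : K, codifferent tau d /\
    forall x : 'rV[R]_n, A x -> \sum_(i < n) tau i d * x 0 i = k%:R.
Proof.
subst n.
have [[A0 k0] | [nA0 Hidx]] := HID; first by rewrite k0 ltnn in Hk.
case: HA => [[p [V HAV]] Haff].
set C := cokermx V.
have pV : ~~ (p <= V)%MS.
  apply/negP => pV; apply: nA0; apply: (proj2 (HAV 0)).
  by rewrite sub0r eqmx_opp.
have pC : p *m C != 0 by rewrite -submxE.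
have [j0 Hj0] : exists j0, (p *m C) 0 j0 != 0.
  apply: NNPP => H; apply: (negP pC); apply/eqP/rowP => j; rewrite [RHS]mxE.
  by apply/eqP/negPn/negP => Hj; apply: H; exists j.
set pc := (p *m C) 0 j0.
pose f (x : 'rV[R]_(\dim {:K})) := (x *m C) 0 j0 / pc.
have fD : forall x y, f (x + y) = f x + f y.
  by move=> x y; rewrite /f mulmxDl mxE mulrDl.
have fZ : forall (c : R) x, f (c *: x) = c * f x.
  by move=> c x; rewrite /f -scalemxAl mxE mulrA.
have f0 : f 0 = 0 by rewrite /f mul0mx mxE mul0r.
have fsum : forall (I : finType) (F : I -> _), f (\sum_i F i) = \sum_i f (F i).
  by move=> I F; apply: big_morph.
have fA : forall x, A x -> f x = 1.
  move=> x /HAV; rewrite submxE mulmxBl subr_eq0 => /eqP E.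
  by rewrite /f E mulfV.
have [P [[UP OP] Hint]] := ib_exists tau_inj.
set om := omega P.
pose Hs := fun x => Lambda tau x /\ lin_span A x.
pose Gs := gen_group (meetL (Lambda tau) A).
have Gmult : forall h, Hs h -> Gs (h *+ k).
  apply: (index_mult Hidx).
  - move=> x y [[a [Oa ->]] Sx] [[b [Ob ->]] Sy]; split; last exact: lin_spanD.
    exists (a + b); split; last by rewrite minD.
    by apply/roiP; apply: OK_add; apply/roiP.
  - exact: gen_groupD.
  - exact: gen_groupN.
  - exact: gen_group0.
have fG : forall x, Gs x -> exists z : int, f x = z%:~R.
  move=> x [m [c [s [Hs' ->]]]]; exists (\sum_j c j).
  rewrite fsum rmorph_sum; apply: eq_bigr => j _.
  by rewrite -scaler_int fZ fA ?mulr1 //; case: (Hs' j).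
pose q (i : 'I_(\dim {:K}).+1) := if unlift ord0 i is Some i' then p + row i' V else p.
have Aq : forall i, A (q i).
  move=> i; apply/HAV; rewrite /q; case: (unlift ord0 i) => [i'|].
    by rewrite addrC addKr row_sub.
  by rewrite subrr sub0mx.
have Ex : forall i, exists X : {m : nat & (('I_m -> R) * ('I_m -> 'rV[R]_(\dim {:K})))%type},
    (forall j, meetL (Lambda tau) A ((tagged X).2 j)) /\ \sum_j (tagged X).1 j = 1 /\
    q i = \sum_j (tagged X).1 j *: (tagged X).2 j.
  move=> i; have [m [c [s [Hs' [Hc Hq]]]]] := (proj2 (Haff (q i))) (Aq i).
  by exists (existT _ m (c, s)).
have [X HX] := fin_all_exists Ex.
pose T := {i : 'I_(\dim {:K}).+1 & 'I_(tag (X i))}.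
pose ptT (t : T) := (tagged (X (tag t))).2 (tagged t).
have Hpt : forall t, meetL (Lambda tau) A (ptT t).
  by move=> [i j]; rewrite /ptT /=; case: (HX i) => H _; exact: H.
have Eb : forall t : T, exists b : K, OK b /\ ptT t = minkowski tau b.
  by move=> t; case: (Hpt t) => _ [b [Ob E]]; exists b; split => //; apply/roiP.
have [bt Hbt] := fin_all_exists Eb.
pose zt (t : T) j := Num.floor (crow P (bt t) 0 j).
have bt_exp : forall t, bt t = \sum_j ((zt t j)%:~R : rat) *: om j.
  move=> t; rewrite {1}(crowE (bt t) UP); apply: eq_bigr => j _.
  by rewrite /zt floorK //; apply: Hint; case: (Hbt t).
pose M : 'M[int]_(#|{: T}|, \dim {:K}) := \matrix_(r, j) zt (enum_val r) j.
pose w : 'cV[R]_(\dim {:K}) := \col_j (k%:R * f (minkowski tau (om j))).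
have SH : forall (z : 'rV[int]_(\dim {:K})) (N0 : int) (y : 'rV[int]_#|{: T}|),
    N0 != 0 -> N0 *: z = y *m M ->
    exists t : int, (map_mx intr z *m w) 0 0 = t%:~R.
  move=> z N0 y N0n Ez.
  pose h := \sum_j ((z 0 j)%:~R : rat) *: om j.
  have Oh : OK h by apply: OK_sum => j _; apply: OK_zscale; exact: OP.
  have fh : (map_mx intr z *m w) 0 0 = k%:R * f (minkowski tau h).
    rewrite !mxE min_sum fsum mulr_sumr; apply: eq_bigr => j _.
    by rewrite !mxE minZ fZ rmorph_int; ring.
  have Nh : (N0%:~R : rat) *: h = \sum_r ((y 0 r)%:~R : rat) *: bt (enum_val r).
    rewrite /h scaler_sumr.
    under [RHS]eq_bigr do rewrite bt_exp scaler_sumr.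
    rewrite [RHS]exchange_big /=; apply: eq_bigr => j _.
    under [RHS]eq_bigr do rewrite scalerA -rmorphM.
    rewrite scalerA -rmorphM -scaler_suml -rmorph_sum; congr (_ *: _); congr (_%:~R).
    move/matrixP: Ez => /(_ 0 j); rewrite !mxE => ->.
    by apply: eq_bigr => r _; rewrite !mxE.
  have Hh : Hs (minkowski tau h).
    split; first by exists h; split => //; apply/roiP.
    exists #|{: T}|, (fun r => (y 0 r)%:~R / N0%:~R), (fun r => ptT (enum_val r)); split.
      by move=> r; case: (Hpt (enum_val r)).
    have N0R : (N0%:~R : R) != 0 by rewrite intr_eq0.
    have -> : minkowski tau h = (N0%:~R : R)^-1 *: minkowski tau ((N0%:~R : rat) *: h).
      by rewrite minZ rmorph_int scalerA mulVf // scale1r.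
    rewrite Nh min_sum scaler_sumr; apply: eq_bigr => r _.
    rewrite minZ rmorph_int scalerA mulrC; congr (_ *: _).
    by case: (Hbt (enum_val r)) => _ <-.
  have [t Ht] := fG _ (Gmult _ Hh).
  by exists t; rewrite fh -Ht -scaler_nat fZ.
have [u Hu] := smith_ext SH.
have Hrow : forall t : T, \sum_j ((zt t j)%:~R : R) * (u j 0)%:~R = k%:R.
  move=> t; move/matrixP: Hu => /(_ (enum_rank t) 0); rewrite !mxE.
  under eq_bigr do rewrite !mxE enum_rankK.
  move=> ->.
  under eq_bigr do rewrite !mxE enum_rankK.
  transitivity (k%:R * f (ptT t)); last by rewrite fA ?mulr1 //; case: (Hpt t).
  case: (Hbt t) => _ ->; rewrite (bt_exp t) min_sum fsum mulr_sumr.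
  by apply: eq_bigr => j _; rewrite minZ fZ rmorph_int; ring.
have UG : Gram P \in unitmx by rewrite unitmxE unitfE (disc_neq0 tau_inj UP).
pose dv : 'rV[rat]_(\dim {:K}) := (\row_j ((u j 0)%:~R : rat)) *m invmx (Gram P).
pose del := \sum_i dv 0 i *: om i.
have trdel : forall l, trQ (del * om l) = (u l 0)%:~R.
  move=> l; rewrite /del mulr_suml (trQ_sum tau_inj).
  have := mulmxKV UG (\row_j ((u j 0)%:~R : rat)); rewrite -/dv.
  move/matrixP => /(_ 0 l); rewrite !mxE => <-; apply: eq_bigr => i _.
  by rewrite -scalerAl (trQZ tau_inj) /Gram [Gram P i l]mxE.
have trdelb : forall t : T, trQ (del * bt t) = (\sum_j zt t j * u j 0)%:~R.
  move=> t; rewrite (bt_exp t) mulr_sumr (trQ_sum tau_inj) rmorph_sum.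
  by apply: eq_bigr => j _; rewrite -scalerAr (trQZ tau_inj) trdel rmorphM.
exists del; split.
  move=> a /roiP Oa.
  have a_exp : a = \sum_j ((Num.floor (crow P a 0 j))%:~R : rat) *: om j.
    rewrite {1}(crowE a UP); apply: eq_bigr => j _.
    by rewrite floorK //; apply: Hint.
  exists (\sum_j Num.floor (crow P a 0 j) * u j 0).
  rewrite /trK (trK_trQ tau_inj) {1}a_exp mulr_sumr (trQ_sum tau_inj).
  rewrite (eq_bigr (fun j => ((Num.floor (crow P a 0 j) * u j 0)%:~R : rat))); last first.
    by move=> j _; rewrite -scalerAr (trQZ tau_inj) trdel rmorphM.
  by rewrite -rmorph_sum rmorph_int.
move=> x Ax.
pose phi (y : 'rV[R]_(\dim {:K})) := \sum_i tau i del * y 0 i.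
have phiD : forall y1 y2, phi (y1 + y2) = phi y1 + phi y2.
  by move=> y1 y2; rewrite /phi -big_split; apply: eq_bigr => i _; rewrite mxE mulrDr.
have phiZ : forall (c : R) y, phi (c *: y) = c * phi y.
  by move=> c y; rewrite /phi mulr_sumr; apply: eq_bigr => i _; rewrite mxE; ring.
have phi0 : phi 0 = 0 by rewrite /phi big1 // => i _; rewrite mxE mulr0.
have phi_sum : forall (I : finType) (F : I -> _), phi (\sum_i F i) = \sum_i phi (F i).
  by move=> I F; apply: big_morph.
have phiN : forall y, phi (- y) = - phi y.
  by move=> y; rewrite -scaleN1r phiZ mulN1r.
have phi_min : forall b, phi (minkowski tau b) = ratr (trQ (del * b)).
  move=> b; rewrite -(trK_trQ tau_inj) /phi; apply: eq_bigr => i _.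
  by rewrite mxE rmorphM.
have phi_pt : forall t, phi (ptT t) = k%:R.
  move=> t; case: (Hbt t) => _ ->; rewrite phi_min trdelb rmorph_int -(Hrow t).
  by rewrite rmorph_sum; apply: eq_bigr => j _; rewrite rmorphM.
have phi_q : forall i, phi (q i) = k%:R.
  move=> i; case: (HX i) => _ [Hc ->].
  rewrite phi_sum (eq_bigr (fun j => (tagged (X i)).1 j * k%:R)).
    by rewrite -mulr_suml Hc mul1r.
  by move=> j _; rewrite phiZ (phi_pt (existT _ i j)).
have [D HD] := submxP (proj1 (HAV x) Ax).
have Ex' : x = p + \sum_i D 0 i *: (q (lift ord0 i) - p).
  rewrite -[x](subrK p) addrC HD mulmx_sum_row; congr (_ + _).
  by apply: eq_bigr => i _; rewrite /q liftK addrC addKr.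
have qp : q ord0 = p by rewrite /q unlift_none.
rewrite -/(phi x) Ex' phiD phi_sum -qp phi_q big1 ?addr0 // => i _.
by rewrite phiZ phiD phiN !phi_q subrr mulr0.
Qed.
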